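(* Let $(\Omega,\mathcal{F})$ be a measurable space and $\mu$ a continuous capacity on $\mathcal{F}$. Let $\{Y_n\}_{n\in\mathbb{N}}$ be real-valued random variables on $(\Omega,\mathcal{F})$ such that for every $n\in\mathbb{N}$ the $\sigma$-algebras $\sigma(Y_k,\ k\le n)$ and $\sigma(Y_k,\ k\ge n+1)$ are independent with respect to $\mu$. Let $\mathcal{T}=\bigcap_{n=1}^{\infty}\sigma(Y_k,\ k\ge n)$ be the tail $\sigma$-algebra. Then for every $A\in\mathcal{T}$: (i) $\mu(A)=0$ or $\mu(A)=1$; and (ii) $\mu(A)=0$ or $\mu(A^c)=0$.
   Context: A capacity on $\mathcal{F}$ is a set function $\mu:\mathcal{F}\to[0,1]$ with $\mu(\emptyset)=0$, $\mu(\Omega)=1$ and $\mu(A)\le\mu(B)$ whenever $A\subseteq B$. It is continuous from below if $\mu(A_n)\to\mu(A)$ whenever $A_n\uparrow A$, continuous from above if $\mu(A_n)\to\mu(A)$ whenever $A_n\downarrow A$, and continuous if both hold. Two subclasses $\mathcal{D}_1,\mathcal{D}_2\subseteq\mathcal{F}$ are independent with respect to $\mu$ if $\mu(A_1\cap A_2)=\mu(A_1)\mu(A_2)$ for all $A_1\in\mathcal{D}_1$, $A_2\in\mathcal{D}_2$. *)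

(* Defs.v *)
From HB Require Import structures.
From mathcomp Require Import all_boot all_order all_algebra.
From mathcomp Require Import all_classical all_reals all_analysis.
Set Implicit Arguments. Unset Strict Implicit. Unset Printing Implicit Defensive.
Import Order.TTheory GRing.Theory Num.Theory.
Import numFieldNormedType.Exports.
Local Open Scope classical_set_scope.
Local Open Scope ring_scope.

Definition capacity (d : measure_display) (T : measurableType d) (R : realType)
  (mu : set T -> R) : Prop :=
  [/\ mu set0 = 0, mu setT = 1,
      (forall A, measurable A -> 0 <= mu A <= 1) &
      (forall A B, measurable A -> measurable B -> A `<=` B -> mu A <= mu B)].

Definition cont_from_below (d : measure_display) (T : measurableType d) (R : realType)
  (mu : set T -> R) : Prop :=
  forall (A : nat -> set T), (forall n, measurable (A n)) ->
    (forall n, A n `<=` A n.+1) ->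
    (mu \o A) @ \oo --> mu (\bigcup_n A n).

Definition cont_from_above (d : measure_display) (T : measurableType d) (R : realType)
  (mu : set T -> R) : Prop :=
  forall (A : nat -> set T), (forall n, measurable (A n)) ->
    (forall n, A n.+1 `<=` A n) ->
    (mu \o A) @ \oo --> mu (\bigcap_n A n).

Definition continuous_capacity (d : measure_display) (T : measurableType d) (R : realType)
  (mu : set T -> R) : Prop :=
  [/\ capacity mu, cont_from_below mu & cont_from_above mu].

Definition indep_classes (T : Type) (R : realType) (mu : set T -> R)
  (D1 D2 : set (set T)) : Prop :=
  forall A1 A2, D1 A1 -> D2 A2 -> mu (A1 `&` A2) = mu A1 * mu A2.

Definition sigma_gen (T : Type) (R : realType) (Y : nat -> T -> R)
  (P : nat -> Prop) : set (set T) :=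
  <<s [set Y k @^-1` B | k in P & B in (@measurable _ R)] >>.

Definition tail_sigma (T : Type) (R : realType) (Y : nat -> T -> R) : set (set T) :=
  \bigcap_(n in [set n : nat | (1 <= n)%N]) sigma_gen Y (fun k => (n <= k)%N).

(* Main.v *)
Require Import Defs.
From HB Require Import structures.
From mathcomp Require Import all_boot all_order all_algebra.
From mathcomp Require Import all_classical all_reals all_analysis.
Import Order.TTheory GRing.Theory Num.Theory.
Import numFieldNormedType.Exports.
Local Open Scope classical_set_scope.
Local Open Scope ring_scope.

Lemma sa_U (T : Type) (G : set (set T)) : sigma_algebra setT G ->
  forall A B, G A -> G B -> G (A `|` B).
Proof.
move=> [G0 GC GU] A B GA GB; rewrite -bigcup2E; apply: GU => -[|[|n]] //=.
Qed.

Lemma sa_C (T : Type) (G : set (set T)) : sigma_algebra setT G ->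
  forall A, G A -> G (~` A).
Proof. by move=> [G0 GC GU] A GA; rewrite -setTD; apply: GC. Qed.

Lemma sa_D (T : Type) (G : set (set T)) : sigma_algebra setT G ->
  forall A B, G A -> G B -> G (A `\` B).
Proof.
move=> sG A B GA GB; rewrite setDE -[A `&` _]setCK setCI setCK.
by apply: sa_C => //; apply: sa_U => //; apply: sa_C.
Qed.

Theorem theorem1 (d : measure_display) (T : measurableType d) (R : realType)
  (mu : set T -> R) (Y : nat -> T -> R) :
  continuous_capacity mu ->
  (forall n, measurable_fun setT (Y n)) ->
  (forall n, indep_classes mu (sigma_gen Y (fun k => (k <= n)%N))
                              (sigma_gen Y (fun k => (n.+1 <= k)%N))) ->
  forall A, tail_sigma Y A ->
    (mu A = 0 \/ mu A = 1) /\ (mu A = 0 \/ mu (~` A) = 0).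
Proof.
move=> [[mu0 muT _ _] cb ca] mY ind A tA.
have sga P : sigma_algebra setT (sigma_gen Y P) by exact: smallest_sigma_algebra.
have sgm P : sigma_gen Y P `<=` measurable.
  apply: smallest_sub; first exact: sigma_algebra_measurable.
  move=> _ [k _ [B mB <-]].
  by have := mY k measurableT B mB; rewrite setTI.
have sgmono (P Q : nat -> Prop) : (forall k, P k -> Q k) ->
    sigma_gen Y P `<=` sigma_gen Y Q.
  move=> PQ; apply: smallest_sub; first exact: smallest_sigma_algebra.
  move=> _ [k Pk [B mB <-]]; apply: sub_sigma_algebra.
  by exists k; [exact: PQ|exists B].
have Asn n : sigma_gen Y (fun k => (n.+1 <= k)%N) A by apply: tA.
have mA : measurable A by apply: (sgm _ _ (Asn 0%N)).
pose Rg := [set B | exists n, sigma_gen Y (fun k => (k <= n)%N) B].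
pose M := [set B | measurable B /\ mu (A `&` B) = mu A * mu B].
have RM : Rg `<=` M.
  move=> B [n Bn]; split; first exact: sgm Bn.
  by rewrite setIC (ind n B A Bn (Asn n)) mulrC.
have ringR : setring Rg.
  split.
  - by exists 0%N; case: (sga (fun k => (k <= 0)%N)).
  - move=> B C [n Bn] [m Cm]; exists (maxn n m); apply: (@sa_U _ (sigma_gen Y (fun k => (k <= maxn n m)%N))).
    + exact: sga.
    + by apply: (sgmono _ _ _ _ Bn) => k /= kn; rewrite leq_max kn.
    + by apply: (sgmono _ _ _ _ Cm) => k /= kn; rewrite leq_max kn orbT.
  - move=> B C [n Bn] [m Cm]; exists (maxn n m); apply: (@sa_D _ (sigma_gen Y (fun k => (k <= maxn n m)%N))).
    + exact: sga.
    + by apply: (sgmono _ _ _ _ Bn) => k /= kn; rewrite leq_max kn.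
    + by apply: (sgmono _ _ _ _ Cm) => k /= kn; rewrite leq_max kn orbT.
have monoM : monotone M.
  split.
  - move=> F ndF MF; split.
      by apply: bigcup_measurable => i _; case: (MF i).
    have sF n : F n `<=` F n.+1 by apply/subsetPset; apply: ndF.
    have subsetP_I n : A `&` F n `<=` A `&` F n.+1 by apply: setIS.
    have h1 := cb (fun i => A `&` F i) (fun i => measurableI _ _ mA (MF i).1)
      (fun n => subsetP_I n).
    rewrite -setI_bigcupr in h1.
    have h2 := cb F (fun i => (MF i).1) sF.
    have h3 := cvgMl_tmp (a := mu A) h2.
    have h4 : (mu \o (fun i => A `&` F i)) @ \oo --> mu A * mu (\bigcup_n F n).
      have -> : mu \o (fun i => A `&` F i) = (fun i => mu A * (mu \o F) i).
        by apply: funext => i /=; rewrite (MF i).2.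
      exact: h3.
    exact: (cvg_unique _ h1 h4).
  - move=> F niF MF; split.
      apply: bigcap_measurable; try by exists 0%N. by move=> i _; case: (MF i).
    have sF n : F n.+1 `<=` F n by apply/subsetPset; apply: niF.
    have subsetP_I n : A `&` F n.+1 `<=` A `&` F n by apply: setIS.
    have h1 := ca (fun i => A `&` F i) (fun i => measurableI _ _ mA (MF i).1)
      (fun n => subsetP_I n).
    rewrite bigcapIr in h1; last by exists 0%N.
    have h2 := ca F (fun i => (MF i).1) sF.
    have h3 := cvgMl_tmp (a := mu A) h2.
    have h4 : (mu \o (fun i => A `&` F i)) @ \oo --> mu A * mu (\bigcap_n F n).
      have -> : mu \o (fun i => A `&` F i) = (fun i => mu A * (mu \o F) i).
        by apply: funext => i /=; rewrite (MF i).2.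
      exact: h3.
    exact: (cvg_unique _ h1 h4).
have srM := monotone_setring_sub_g_sigma_ring monoM ringR RM.
have sigR : sigma_algebra setT <<sr Rg>>.
  have [s0 sD sU] := smallest_sigma_ring Rg.
  split => // B HB; apply: sD => //; apply: sub_g_sigma_ring; exists 0%N.
  by case: (sga (fun k => (k <= 0)%N)) => h0 hC _; have := hC _ h0; rewrite setD0.
have AsR : <<sr Rg>> A.
  apply: (smallest_sub sigR _ (Asn 0%N)).
  move=> _ [k k1 [B mB <-]]; apply: sub_g_sigma_ring.
  exists k; apply: sub_sigma_algebra; exists k => //; by exists B.
have AcsR : <<sr Rg>> (~` A) by rewrite -setTD; case: sigR => _ + _; apply.
have [_ eA] := srM _ AsR.
have [_ eAc] := srM _ AcsR.
rewrite setIid in eA; rewrite setICr mu0 in eAc.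
have A01 : mu A = 0 \/ mu A = 1.
  have : mu A * (1 - mu A) = 0 by rewrite mulrBr mulr1 -eA subrr.
  move/eqP; rewrite mulf_eq0 subr_eq0 => /orP[/eqP|/eqP] ->; [left|right] => //.
split=> //; case: A01 => [->|h]; [by left|right].
by move: eAc; rewrite h mul1r.
Qed.
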